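(* Let $T$ be any finite rooted tree with root $r$ (arbitrary numbers of children), let $(X_v)$ be a tree Markov random field on $T$ over a finite state set $\mathcal S$ whose edge transition matrices all satisfy $\|M_e\|\le\lambda$ for some $0<\lambda<1$, and let $A\subseteq\mathcal S$. Then $$\mathbf V(Z_A)\le\frac12\sum_{v\in V(T)\setminus\{r\}}\Delta(v)^2,\qquad\text{where }\Delta(v)=2\sum_{\ell\in L_v}\lambda^{d(v,\ell)}.$$ More precisely, for every vertex $u$ and every $b\in\mathcal S$, the number $Z_u$ of leaves $\ell$ of the subtree rooted at $u$ with $X_\ell\in A$ satisfies $\mathbf V(Z_u\mid X_u=b)\le\frac12\sum_{v\in V(T_u)\setminus\{u\}}\Delta(v)^2$.
   Context: A tree Markov random field on a rooted tree $T$ with root $r$ over a finite state set $\mathcal S$ assigns to each edge $e=(u,v)$ ($u$ the parent of $v$) an $|\mathcal S|\times|\mathcal S|$ row-stochastic matrix $M_e$; the $\mathcal S$-valued random variables $(X_v)_{v\in V(T)}$ are generated by drawing $X_r$ from a distribution on $\mathcal S$ and then, going down the tree, drawing each $X_v$ independently of everything else given its parent's state, with $\mathbf P[X_v=b\mid X_u=a]=M_e(a,b)$. For a real square matrix $M$, $\|M\|=\max_{x\neq 0,\ x\perp\mathbf 1}\|x^TM\|_1/\|x\|_1$, where $\mathbf 1$ is the all-ones vector. $T_u$ is the subtree rooted at $u$, $L_v$ is the set of leaves of $T_v$, and $d(v,\ell)$ is the number of edges on the path from $v$ to $\ell$. $Z_A$ is the number of leaves $\ell$ of $T$ with $X_\ell\in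 A$; conditioning on $X_u=b$ means running the process on $T_u$ started with state $b$ at $u$. $\mathbf V$ denotes variance. *)

(* Defs.v *)
From Stdlib Require List.
From HB Require Import structures.
From mathcomp Require Import all_boot all_order all_algebra.
Set Implicit Arguments. Unset Strict Implicit. Unset Printing Implicit Defensive.
Import Order.TTheory GRing.Theory Num.Theory.
Local Open Scope ring_scope.

(* A finite rooted tree whose edges (parent -> child) carry transition
   matrices M : S -> S -> R  (M a b = P[X_child = b | X_parent = a]). *)
Inductive tree (S : Type) (R : Type) : Type :=
  Node of seq ((S -> S -> R) * tree S R).

Inductive config (S : Type) : Type :=
  CNode of S & seq (config S).

(* Law of the tree Markov random field on T_u started with state b at u:
   a finite list of (probability, configuration) pairs, generated top-down:
   each child independently draws its state from the row M b of its edge. *)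
Fixpoint law (S : finType) (R : nzRingType) (t : tree S R) (b : S)
  : seq (R * config S) :=
  match t with
  | Node ch =>
    let fix go (ch : seq ((S -> S -> R) * tree S R)) : seq (R * seq (config S)) :=
      match ch with
      | [::] => [:: (1, [::])]
      | (M, t') :: ch' =>
          [seq (p.1 * q.1, p.2 :: q.2)
          | p <- [seq (M b s * w.1, w.2) | s <- enum S, w <- law t' s],
            q <- go ch']
      end in
    [seq (q.1, CNode b q.2) | q <- go ch]
  end.

Fixpoint ZA (S : finType) (A : {set S}) (c : config S) : nat :=
  match c with
  | CNode s cs =>
    if cs is [::] then (s \in A : nat)
    else (fix go (cs : seq (config S)) : nat :=
            match cs with [::] => 0%N | c' :: cs' => (ZA A c' + go cs')%N end) cs
  end.

Definition EZ (S : finType) (R : nzRingType) (A : {set S}) (t : tree S R) (b : S)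
  (k : nat) : R :=
  \sum_(p <- law t b) p.1 * ((ZA A p.2)%:R ^+ k).

Definition VarZ (S : finType) (R : nzRingType) (A : {set S}) (t : tree S R) (b : S) : R :=
  EZ A t b 2 - (EZ A t b 1) ^+ 2.

Fixpoint edges (S R : Type) (t : tree S R) : seq (S -> S -> R) :=
  match t with
  | Node ch =>
    (fix go (ch : seq ((S -> S -> R) * tree S R)) :=
       match ch with
       | [::] => [::]
       | (M, t') :: ch' => M :: edges t' ++ go ch'
       end) ch
  end.

Definition row_stochastic (S : finType) (R : numDomainType) (M : S -> S -> R) : Prop :=
  (forall a b, 0 <= M a b) /\ (forall a, \sum_(b : S) M a b = 1).

(* ||M|| <= lam, where ||M|| = max_{x <> 0, x _|_ 1} ||x^T M||_1 / ||x||_1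
   (unfolded; the case x = 0 is trivial). *)
Definition norm_le (S : finType) (R : numDomainType) (M : S -> S -> R) (lam : R) : Prop :=
  forall x : S -> R, \sum_(i : S) x i = 0 ->
    \sum_(j : S) `| \sum_(i : S) x i * M i j | <= lam * \sum_(i : S) `| x i |.

(* sum_{l in L_v} lam^{d(v,l)} for the subtree rooted at v. *)
Fixpoint leafw (S : Type) (R : nzRingType) (lam : R) (t : tree S R) : R :=
  match t with
  | Node [::] => 1
  | Node ch =>
    (fix go (ch : seq ((S -> S -> R) * tree S R)) : R :=
       match ch with
       | [::] => 0
       | (_, t') :: ch' => lam * leafw lam t' + go ch'
       end) ch
  end.

Definition Delta (S : Type) (R : nzRingType) (lam : R) (t : tree S R) : R :=
  2 * leafw lam t.

(* sum over v in V(T_u) \ {u} of Delta(v)^2 *)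
Fixpoint sumDelta2 (S : Type) (R : nzRingType) (lam : R) (t : tree S R) : R :=
  match t with
  | Node ch =>
    (fix go (ch : seq ((S -> S -> R) * tree S R)) : R :=
       match ch with
       | [::] => 0
       | (_, t') :: ch' => Delta lam t' ^+ 2 + sumDelta2 lam t' + go ch'
       end) ch
  end.

Definition good_edges (S : finType) (R : numDomainType) (lam : R) (t : tree S R) : Prop :=
  forall M, List.In M (edges t) -> row_stochastic M /\ norm_le M lam.

(* Main.v *)
Require Import Defs.
From HB Require Import structures.
From mathcomp Require Import all_boot all_order all_algebra.
From mathcomp Require Import ring lra.
Import Order.TTheory GRing.Theory Num.Theory.
Local Open Scope ring_scope.

Section Proof.
Variables (R : realFieldType) (S : finType) (A : {set S}) (lam : R).

Definition golaw (b : S) :=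
  fix go (ch : seq ((S -> S -> R) * tree S R)) : seq (R * seq (config S)) :=
      match ch with
      | [::] => [:: (1, [::])]
      | (M, t') :: ch' =>
          [seq (p.1 * q.1, p.2 :: q.2)
          | p <- [seq (M b s * w.1, w.2) | s <- enum S, w <- law t' s],
            q <- go ch']
      end.

Lemma lawE ch b : law (Node ch) b = [seq (q.1, CNode b q.2) | q <- golaw b ch].
Proof. by []. Qed.

Definition Zs := fix go (cs : seq (config S)) : nat :=
            match cs with [::] => 0%N | c' :: cs' => (ZA A c' + go cs')%N end.

Lemma ZAcons b c cs : ZA A (CNode b (c :: cs)) = (ZA A c + Zs cs)%N.
Proof. by []. Qed.

Definition goleafw := fix go (ch : seq ((S -> S -> R) * tree S R)) : R :=
       match ch with
       | [::] => 0
       | (_, t') :: ch' => lam * leafw lam t' + go ch'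
       end.
Lemma leafwE c ch : leafw lam (Node (c :: ch)) = goleafw (c :: ch).
Proof. by []. Qed.

Definition gosD2 := fix go (ch : seq ((S -> S -> R) * tree S R)) : R :=
       match ch with
       | [::] => 0
       | (_, t') :: ch' => Delta lam t' ^+ 2 + sumDelta2 lam t' + go ch'
       end.
Lemma sD2E ch : sumDelta2 lam (Node ch) = gosD2 ch.
Proof. by []. Qed.

Definition goedges := fix go (ch : seq ((S -> S -> R) * tree S R)) :=
       match ch with
       | [::] => [::]
       | (M, t') :: ch' => M :: edges t' ++ go ch'
       end.
Lemma edgesE ch : edges (Node ch) = goedges ch.
Proof. by []. Qed.

Definition Ex (T : Type) (L : seq (R * T)) (f : T -> R) := \sum_(p <- L) p.1 * f p.2.
Arguments Ex {T}.

Lemma Ex_golaw b M t' ch G :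
  Ex (golaw b ((M, t') :: ch)) G =
  \sum_(s : S) M b s * Ex (law t' s) (fun c => Ex (golaw b ch) (fun cs => G (c :: cs))).
Proof.
rewrite /Ex /= big_allpairs_dep /= big_allpairs_dep /= big_enum /=.
apply: eq_bigr => s _; rewrite mulr_sumr; apply: eq_bigr => w _.
rewrite !mulr_sumr; apply: eq_bigr => q _ /=; ring.
Qed.

Definition tree_ind' (P : tree S R -> Prop)
  (H : forall ch, (forall M t', List.In (M, t') ch -> P t') -> P (Node ch)) :=
  fix F (t : tree S R) : P t :=
  match t with
  | Node ch => H ch ((fix G (l : seq ((S -> S -> R) * tree S R)) :
        forall M t', List.In (M, t') l -> P t' :=
      match l with
      | [::] => fun M t' (f : List.In (M, t') [::]) => False_ind _ f
      | (M0, t0) :: l' => fun M t' (h : List.In (M, t') ((M0, t0) :: l')) =>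
          match h with
          | or_introl e => eq_ind t0 P (F t0) t' (f_equal snd e)
          | or_intror h' => G l' M t' h'
          end
      end) ch)
  end.


Lemma leafw_ge0 : 0 <= lam -> forall t : tree S R, 0 <= leafw lam t.
Proof.
move=> hl t; elim/tree_ind': t => ch IH.
case: ch IH => [|c ch] IH; first by [].
rewrite leafwE; elim: (c :: ch) IH => [|[M t'] l IHl] IH //=.
apply: addr_ge0; first by apply: mulr_ge0 => //; apply: (IH M); left.
by apply: IHl => M0 t0 h; apply: (IH M0); right.
Qed.

Lemma good_cons (M : S -> S -> R) (t' : tree S R) ch : good_edges lam (Node ((M, t') :: ch)) ->
  [/\ row_stochastic M /\ norm_le M lam, good_edges lam t' & good_edges lam (Node ch)].
Proof.
move=> g; split.
- by apply: g; left.
- by move=> M0 h; apply: g; right; apply: List.in_or_app; left.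
- by move=> M0 h; apply: g; right; apply: List.in_or_app; right.
Qed.

Definition m k b ch := Ex (golaw b ch) (fun cs => (Zs cs)%:R ^+ k).

Lemma EZ_node b c ch k : EZ A (Node (c :: ch)) b k = m k b (c :: ch).
Proof.
transitivity (Ex (golaw b (c :: ch)) (fun cs => (ZA A (CNode b cs))%:R ^+ k)).
  by rewrite /EZ lawE /Ex big_map.
by case: c => M t'; rewrite /m !Ex_golaw.
Qed.

Lemma EZ_leaf b k : EZ A (@Node S R [::]) b k = ((b \in A) : nat)%:R ^+ k.
Proof. by rewrite /EZ /= big_seq1 mul1r. Qed.

Lemma m_nil k b : m k b [::] = (0%N)%:R ^+ k.
Proof. by rewrite /m /Ex /= big_seq1 mul1r. Qed.

Lemma m_cons0 b M t' ch :
  m 0 b ((M, t') :: ch) = \sum_s M b s * (EZ A t' s 0 * m 0 b ch).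
Proof.
rewrite /m Ex_golaw; apply: eq_bigr => s _; congr (_ * _).
rewrite /EZ /Ex !mulr_suml; apply: eq_bigr => w _ /=.
rewrite !mulr_sumr; apply: eq_bigr => q _ /=; rewrite !expr0; ring.
Qed.

Lemma m_cons1 b M t' ch :
  m 1 b ((M, t') :: ch) =
  \sum_s M b s * (EZ A t' s 1 * m 0 b ch + m 1 b ch * EZ A t' s 0).
Proof.
rewrite /m Ex_golaw; apply: eq_bigr => s _; congr (_ * _).
rewrite /EZ /Ex mulr_suml mulr_sumr -big_split; apply: eq_bigr => w _ /=.
rewrite !mulr_sumr !mulr_suml -big_split; apply: eq_bigr => q _ /=.
rewrite natrD ?expr0 ?expr1; ring.
Qed.

Lemma m_cons2 b M t' ch :
  m 2 b ((M, t') :: ch) =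
  \sum_s M b s * (EZ A t' s 2 * m 0 b ch + 2 * m 1 b ch * EZ A t' s 1
                  + m 2 b ch * EZ A t' s 0).
Proof.
rewrite /m Ex_golaw; apply: eq_bigr => s _; congr (_ * _).
rewrite /EZ /Ex mulr_suml !mulr_sumr -!big_split; apply: eq_bigr => w _ /=.
rewrite !mulr_sumr !mulr_suml -!big_split; apply: eq_bigr => q _ /=.
rewrite natrD ?expr0 ?expr1; ring.
Qed.


Definition Claim (t : tree S R) : Prop :=
  good_edges lam t ->
  [/\ (forall s, EZ A t s 0 = 1),
      (forall x : S -> R, \sum_i x i = 0 ->
          `|\sum_s x s * EZ A t s 1| <= 2^-1 * leafw lam t * \sum_i `|x i|)
    & (forall s, VarZ A t s <= 2^-1 * sumDelta2 lam t)].

Lemma sum_delta (s : S) (f : S -> R) : \sum_i (i == s)%:R * f i = f s.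
Proof.
rewrite (bigD1 s) //= eqxx mul1r big1 ?addr0 // => i /negbTE ->.
by rewrite mul0r.
Qed.

Lemma sum_delta1 (s : S) : \sum_i ((i == s)%:R : R) = 1.
Proof.
by rewrite -[RHS](sum_delta s (fun _ => 1)); apply: eq_bigr => i _; rewrite mulr1.
Qed.

Lemma var_bound (p f : S -> R) (L : R) :
  (forall s, 0 <= p s) -> \sum_s p s = 1 ->
  (forall s, `|f s - \sum_j p j * f j| <= L) ->
  \sum_s p s * f s ^+ 2 - (\sum_s p s * f s) ^+ 2 <= L ^+ 2.
Proof.
move=> p0 p1 hf; set a := \sum_j p j * f j.
have -> : \sum_s p s * f s ^+ 2 - a ^+ 2 = \sum_s p s * (f s - a) ^+ 2.
  have e : \sum_s p s * (f s - a) ^+ 2 =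
      \sum_s p s * f s ^+ 2 - 2 * a * (\sum_s p s * f s) + a ^+ 2 * \sum_s p s.
    rewrite [2 * a * _]mulr_sumr [a ^+ 2 * _]mulr_sumr -sumrB -big_split; apply: eq_bigr => s _ /=; ring.
  by rewrite e p1 -/a; ring.
rewrite -[X in _ <= X]mul1r -p1 mulr_suml; apply: ler_sum => s _.
apply: ler_wpM2l => //.
have h := hf s; rewrite -/a in h; have h0 := normr_ge0 (f s - a).
rewrite -(real_normK (num_real (f s - a))).
move: h h0; set d := `|f s - a| => h h0; nra.
Qed.

Lemma list_step (ch : seq ((S -> S -> R) * tree S R)) : 0 <= lam ->
  (forall M t', List.In (M, t') ch -> Claim t') -> good_edges lam (Node ch) ->
  [/\ (forall b, m 0 b ch = 1),
      (forall x : S -> R, \sum_i x i = 0 ->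
          `|\sum_s x s * m 1 s ch| <= 2^-1 * goleafw ch * \sum_i `|x i|)
    & (forall b, m 2 b ch - m 1 b ch ^+ 2 <= 2^-1 * gosD2 ch)].
Proof.
move=> hl; elim: ch => [|[M t'] ch IHch] Hyp g.
  split.
  - by move=> b; rewrite m_nil expr0.
  - move=> x _; rewrite /= big1 => [|s _]; last by rewrite m_nil expr1 mulr0.
    by rewrite normr0 mulr0 mul0r.
  - by move=> b; rewrite !m_nil /= expr1 !expr0n /= subrr mulr0.
have [[[M0 M1] Mn] gt gch] := good_cons M t' ch g.
have [C0 C1 C2] := Hyp M t' (or_introl erefl) gt.
have [I0 I1 I2] := IHch (fun M0 t0 h => Hyp M0 t0 (or_intror h)) gch.
have lw0 := leafw_ge0 hl t'.
have m0E : forall b, m 0 b ((M, t') :: ch) = 1.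
  by move=> b; rewrite m_cons0; under eq_bigr => s _ do rewrite C0 I0 !mulr1; exact: M1.
have m1E : forall b, m 1 b ((M, t') :: ch) = \sum_s M b s * EZ A t' s 1 + m 1 b ch.
  move=> b; rewrite m_cons1 -[X in _ = _ + X]mulr1 -(M1 b) mulr_sumr -big_split.
  by apply: eq_bigr => s _; rewrite C0 I0 /=; ring.
split => //.
- move=> x hx.
  under eq_bigr => s _ do rewrite m1E mulrDr.
  rewrite big_split /=.
  set y := fun j => \sum_i x i * M i j.
  have e1 : \sum_s x s * (\sum_j M s j * EZ A t' j 1) = \sum_j y j * EZ A t' j 1.
    rewrite /y; under eq_bigr => s _ do rewrite mulr_sumr.
    rewrite exchange_big; apply: eq_bigr => j _; rewrite mulr_suml.
    by apply: eq_bigr => i _; rewrite mulrA.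
  have hy : \sum_j y j = 0.
    rewrite /y exchange_big -[RHS]hx; apply: eq_bigr => i _.
    by rewrite -mulr_sumr M1 mulr1.
  have b1 := C1 y hy; have b2 := I1 x hx; have b3 := Mn x hx.
  rewrite e1; apply: le_trans (ler_normD _ _) _.
  have -> : 2^-1 * goleafw ((M, t') :: ch) * \sum_i `|x i| =
     2^-1 * leafw lam t' * (lam * \sum_i `|x i|) + 2^-1 * goleafw ch * \sum_i `|x i|.
    by rewrite /=; ring.
  apply: lerD => //; apply: le_trans b1 _.
  apply: ler_wpM2l => //; apply: mulr_ge0 => //; lra.
- move=> b; rewrite m1E m_cons2 I0.
  set a1 := \sum_s M b s * EZ A t' s 1.
  have e2 : \sum_s M b s * (EZ A t' s 2 * 1 + 2 * m 1 b ch * EZ A t' s 1 +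
               m 2 b ch * EZ A t' s 0)
      = \sum_s M b s * EZ A t' s 2 + 2 * m 1 b ch * a1 + m 2 b ch.
    rewrite [X in _ = _ + X](_ : _ = \sum_s M b s * m 2 b ch); last first.
      by rewrite -mulr_suml M1 mul1r.
    rewrite /a1 [2 * _ * _]mulr_sumr -!big_split.
    by apply: eq_bigr => s _; rewrite C0 /=; ring.
  rewrite e2.
  have hv : \sum_s M b s * EZ A t' s 2 <=
      2^-1 * sumDelta2 lam t' + \sum_s M b s * EZ A t' s 1 ^+ 2.
    rewrite [X in X + _](_ : _ = \sum_s M b s * (2^-1 * sumDelta2 lam t')); last first.
      by rewrite -mulr_suml M1 mul1r.
    rewrite -big_split; apply: ler_sum => s _.
    rewrite /= -mulrDr; apply: ler_wpM2l => //.
    by have := C2 s; rewrite /VarZ; lra.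
  have hw : \sum_s M b s * EZ A t' s 1 ^+ 2 - a1 ^+ 2 <= leafw lam t' ^+ 2.
    apply: var_bound => // s.
    pose x := fun i => (i == s)%:R - M b i.
    have hx : \sum_i x i = 0 by rewrite /x sumrB sum_delta1 M1 subrr.
    have := C1 x hx.
    have -> : \sum_s0 x s0 * EZ A t' s0 1 = EZ A t' s 1 - a1.
      rewrite /x; under eq_bigr => i _ do rewrite mulrBl.
      by rewrite sumrB sum_delta.
    move=> h; apply: le_trans h _.
    have hs : \sum_i `|x i| <= 2.
      apply: le_trans (_ : \sum_i ((i == s)%:R + M b i) <= _).
        apply: ler_sum => i _; rewrite /x; apply: le_trans (ler_normB _ _) _.
        by rewrite ger0_norm ?ger0_norm.
      by rewrite big_split /= sum_delta1 M1.
    have : 0 <= 2^-1 * leafw lam t' by apply: mulr_ge0 => //; lra.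
    move=> h0; apply: le_trans (ler_wpM2l h0 hs) _; lra.
  have hI := I2 b.
  rewrite /= /Delta.
  have hsq : 0 <= leafw lam t' ^+ 2 by apply: exprn_ge0.
  rewrite expr2 in hw hsq *.
  have -> : (2 * leafw lam t') ^+ 2 = 4 * (leafw lam t' * leafw lam t') by ring.
  lra.
Qed.

Lemma half_trick (x : S -> R) : \sum_i x i = 0 ->
  `|\sum_s x s * ((s \in A) : nat)%:R| <= 2^-1 * \sum_i `|x i|.
Proof.
move=> hx.
set T := \sum_s x s * ((s \in A) : nat)%:R.
have e : \sum_s x s * (1 - ((s \in A) : nat)%:R) = - T.
  rewrite /T; under eq_bigr => s _ do rewrite mulrBr mulr1.
  by rewrite sumrB hx sub0r.
have h1 : `|T| <= \sum_s `|x s| * ((s \in A) : nat)%:R.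
  apply: le_trans (ler_norm_sum _ _ _) _; apply: ler_sum => s _.
  by rewrite normrM normr_nat.
have h2 : `|- T| <= \sum_s `|x s| * (1 - ((s \in A) : nat)%:R).
  rewrite -e; apply: le_trans (ler_norm_sum _ _ _) _; apply: ler_sum => s _.
  by rewrite normrM (ger0_norm (x := 1 - _)) //; case: (s \in A) => /=; rewrite ?subr0 ?subrr.
have e2 : \sum_s `|x s| * ((s \in A) : nat)%:R + \sum_s `|x s| * (1 - ((s \in A) : nat)%:R)
   = \sum_i `|x i|.
  by rewrite -big_split; apply: eq_bigr => s _ /=; ring.
rewrite normrN in h2; lra.
Qed.

Lemma claim_all : 0 <= lam -> forall t : tree S R, Claim t.
Proof.
move=> hl t; elim/tree_ind': t => ch IH good.
case: ch IH good => [|c ch] IH good.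
  split.
  - by move=> s; rewrite EZ_leaf expr0.
  - move=> x hx; rewrite /= mulr1.
    under eq_bigr => s _ do rewrite EZ_leaf expr1.
    exact: half_trick.
  - by move=> s; rewrite /VarZ !EZ_leaf expr1 subrr /= mulr0.
have [I0 I1 I2] := list_step (c :: ch) hl IH good.
split.
- by move=> s; rewrite EZ_node.
- move=> x hx; under eq_bigr => s _ do rewrite EZ_node.
  by rewrite leafwE; apply: I1.
- by move=> s; rewrite /VarZ !EZ_node sD2E.
Qed.
End Proof.

Theorem mainTheorem5 (R : realFieldType) (S : finType) (A : {set S})
  (lam : R) (t : tree S R) (b : S) :
  0 < lam < 1 ->
  good_edges lam t ->
  VarZ A t b <= 2^-1 * sumDelta2 lam t.
Proof.
move=> /andP [hl _] g.
have [_ _ h] := @claim_all R S A lam (ltW hl) t g.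
exact: h.
Qed.
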